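(* Let $W$ be a normal PO-dilator, $X$ a partial order, $(Z,\iota,\kappa)$ an initial Kruskal fixed point of $W$ over $X$, and $(Z',\iota',\kappa')$ another Kruskal fixed point of $W$ over $X$. Let $f:Z\to Z'$ be the unique quasi embedding with $f\circ\iota=\iota'$ and $f\circ\kappa=\kappa'\circ W(f)$. If $x\leq_X y$ implies $\iota'(x)\leq_{Z'}\iota'(y)$ for all $x,y\in X$, then $f$ is an embedding.
   Context: A quasi embedding between partial orders $X,Y$ is a function $f$ with $f(x)\leq_Y f(y)\Rightarrow x\leq_X y$; an embedding also satisfies the converse. $\mathrm{PO}$ is the category of partial orders and quasi embeddings. $[X]^{<\omega}$ denotes the finite subsets of $X$, with $[f]^{<\omega}(a)=\{f(x)\mid x\in a\}$. A PO-dilator is a functor $W:\mathrm{PO}\to\mathrm{PO}$ mapping embeddings to embeddings, with a natural transformation $\operatorname{supp}^W:W\Rightarrow[\cdot]^{<\omega}$ such that for every embedding $f:X\to Y$, $\operatorname{rng}(W(f))=\{\sigma\in W(Y)\mid\operatorname{supp}^W_Y(\sigma)\subseteq\operatorname{rng}(f)\}$. For finite $a,b\subseteq X$, $a\leq^{\mathrm{fin}}_X b$ iff every $x\in a$ has some $y\in b$ with $x\leq_X y$ ($z\leq^{\mathrm{fin}}_X b$ means $\{z\}\leq^{\mathrm{fin}}_X b$). $W$ is normal if $\sigma\leq_{W(X)}\tau$ implies $\operatorname{supp}^W_X(\sigma)\leq^{\mathrm{fin}}_X\operatorname{supp}^W_X(\tau)$. A Kruskal fixed point of $W$ over $X$ is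 a partial order $Z$ with functions $\iota:X\to Z$, $\kappa:W(Z)\to Z$ such that $\operatorname{rng}(\iota)\cap\operatorname{rng}(\kappa)=\emptyset$ and, for all $x,y\in X$ and $\sigma,\tau\in W(Z)$: $\iota(x)\leq_Z\iota(y)\Rightarrow x\leq_X y$; $\iota(x)\leq_Z\kappa(\tau)$ iff $\iota(x)\leq^{\mathrm{fin}}_Z\operatorname{supp}^W_Z(\tau)$; $\kappa(\sigma)\not\leq_Z\iota(y)$; $\kappa(\sigma)\leq_Z\kappa(\tau)$ iff ($\sigma\leq_{W(Z)}\tau$ or $\kappa(\sigma)\leq^{\mathrm{fin}}_Z\operatorname{supp}^W_Z(\tau)$). It is initial if for every Kruskal fixed point $(Z',\iota',\kappa')$ of $W$ over $X$ there is a unique quasi embedding $f:Z\to Z'$ with $f\circ\iota=\iota'$ and $f\circ\kappa=\kappa'\circ W(f)$. *)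

(* Defs.v *)
From Stdlib Require Import List.

Record PO : Type := {
  carrier :> Type;
  le : carrier -> carrier -> Prop;
  le_refl : forall x, le x x;
  le_antisym : forall x y, le x y -> le y x -> x = y;
  le_trans : forall x y z, le x y -> le y z -> le x z
}.
Arguments le {p} _ _.

Definition quasi_emb {X Y : PO} (f : X -> Y) : Prop :=
  forall x y : X, le (f x) (f y) -> le x y.

Definition emb {X Y : PO} (f : X -> Y) : Prop :=
  forall x y : X, le (f x) (f y) <-> le x y.

(* Morphisms of the category PO: quasi embeddings *)
Record qemb (X Y : PO) : Type := { qfun :> X -> Y; qfun_qe : quasi_emb qfun }.
Arguments qfun {X Y} _ _.

Definition qid (X : PO) : qemb X X :=
  {| qfun := fun x => x; qfun_qe := fun x y h => h |}.

Definition qcomp {X Y Z : PO} (g : qemb Y Z) (f : qemb X Y) : qemb X Z.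
Proof.
  refine {| qfun := fun x => g (f x) |}.
  intros x y h. apply (qfun_qe _ _ f), (qfun_qe _ _ g), h.
Defined.

Definition finite_set {X : Type} (a : X -> Prop) : Prop :=
  exists l : list X, forall x, a x -> In x l.

Definition le_fin {X : PO} (a b : X -> Prop) : Prop :=
  forall x, a x -> exists y, b y /\ le x y.

Definition le_fin1 {X : PO} (z : X) (b : X -> Prop) : Prop :=
  le_fin (fun x => x = z) b.

Record PO_dilator : Type := {
  Wobj : PO -> PO;
  Wmap : forall X Y : PO, qemb X Y -> Wobj X -> Wobj Y;
  Wmap_qe : forall X Y (f : qemb X Y), quasi_emb (Wmap X Y f);
  Wmap_id : forall X (s : Wobj X), Wmap X X (qid X) s = s;
  Wmap_comp : forall X Y Z (g : qemb Y Z) (f : qemb X Y) (s : Wobj X),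
      Wmap X Z (qcomp g f) s = Wmap Y Z g (Wmap X Y f s);
  Wmap_emb : forall X Y (f : qemb X Y), emb f -> emb (Wmap X Y f);
  (* support: a natural transformation W => [.]^{<omega} *)
  supp : forall X : PO, Wobj X -> (X -> Prop);
  supp_finite : forall X (s : Wobj X), finite_set (supp X s);
  supp_natural : forall X Y (f : qemb X Y) (s : Wobj X) (y : Y),
      supp Y (Wmap X Y f s) y <-> exists x, supp X s x /\ f x = y;
  supp_range : forall X Y (f : qemb X Y), emb f ->
      forall t : Wobj Y,
        (exists s : Wobj X, Wmap X Y f s = t) <->
        (forall y, supp Y t y -> exists x, f x = y)
}.
Arguments Wmap p {X Y} _ _.
Arguments supp p {X} _ _.

Definition normal (W : PO_dilator) : Prop :=
  forall (X : PO) (s t : Wobj W X), le s t -> le_fin (supp W s) (supp W t).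

Definition kruskal_fp (W : PO_dilator) (X Z : PO)
    (iota : X -> Z) (kappa : Wobj W Z -> Z) : Prop :=
  (forall x s, iota x <> kappa s) /\
  (forall x y : X, le (iota x) (iota y) -> le x y) /\
  (forall (x : X) (t : Wobj W Z),
      le (iota x) (kappa t) <-> le_fin1 (iota x) (supp W t)) /\
  (forall (s : Wobj W Z) (y : X), ~ le (kappa s) (iota y)) /\
  (forall s t : Wobj W Z,
      le (kappa s) (kappa t) <-> (le s t \/ le_fin1 (kappa s) (supp W t))).

Definition fp_hom (W : PO_dilator) (X Z Z' : PO)
    (iota : X -> Z) (kappa : Wobj W Z -> Z)
    (iota' : X -> Z') (kappa' : Wobj W Z' -> Z') (f : qemb Z Z') : Prop :=
  (forall x, f (iota x) = iota' x) /\
  (forall s, f (kappa s) = kappa' (Wmap W f s)).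

Definition initial_kruskal_fp (W : PO_dilator) (X Z : PO)
    (iota : X -> Z) (kappa : Wobj W Z -> Z) : Prop :=
  kruskal_fp W X Z iota kappa /\
  forall (Z' : PO) (iota' : X -> Z') (kappa' : Wobj W Z' -> Z'),
    kruskal_fp W X Z' iota' kappa' ->
    exists f : qemb Z Z',
      fp_hom W X Z Z' iota kappa iota' kappa' f /\
      forall g : qemb Z Z', fp_hom W X Z Z' iota kappa iota' kappa' g ->
        forall z, g z = f z.

(* Main.v *)
Require Import Defs.
From Stdlib Require Import List Arith Lia Classical ProofIrrelevance.

Definition subPO (Z : PO) (S : Z -> Prop) : PO.
Proof.
  refine {| carrier := {z : Z | S z};
            le := fun a b => le (proj1_sig a) (proj1_sig b) |}.
  - intros; apply le_refl.
  - intros [a Ha] [b Hb] h1 h2; simpl in *.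
    destruct (le_antisym _ a b h1 h2). f_equal. apply proof_irrelevance.
  - intros a b c; apply le_trans.
Defined.

Definition sincl (Z : PO) (S : Z -> Prop) : qemb (subPO Z S) Z.
Proof.
  refine {| qfun := fun (a : subPO Z S) => proj1_sig (a : {z : Z | S z}) |}.
  intros x y h; exact h.
Defined.

Lemma incl_emb Z S : emb (sincl Z S).
Proof. intros x y; simpl; tauto. Qed.

Lemma kappaS_ok (W : PO_dilator) (Z : PO) (S : Z -> Prop) (kappa : Wobj W Z -> Z)
  (Hk : forall s, (forall z, supp W s z -> S z) -> S (kappa s))
  (s : Wobj W (subPO Z S)) : S (kappa (Wmap W (sincl Z S) s)).
Proof.
  apply Hk. intros z Hz. apply supp_natural in Hz.
  destruct Hz as [y [_ <-]]. exact (proj2_sig y).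
Qed.

Definition kappaS (W : PO_dilator) (Z : PO) (S : Z -> Prop) (kappa : Wobj W Z -> Z)
  (Hk : forall s, (forall z, supp W s z -> S z) -> S (kappa s))
  (s : Wobj W (subPO Z S)) : subPO Z S :=
  exist _ (kappa (Wmap W (sincl Z S) s)) (kappaS_ok W Z S kappa Hk s).

Definition iotaS (X Z : PO) (S : Z -> Prop) (iota : X -> Z) (Hi : forall x, S (iota x))
  (x : X) : subPO Z S := exist _ (iota x) (Hi x).

Lemma le_fin1_sub (W : PO_dilator) (Z : PO) (S : Z -> Prop) (u : subPO Z S)
  (t : Wobj W (subPO Z S)) :
  le_fin1 u (supp W t) <-> le_fin1 (proj1_sig u) (supp W (Wmap W (sincl Z S) t)).
Proof.
  unfold le_fin1, le_fin; split.
  - intros H x ->. destruct (H u eq_refl) as [y [Hy Hle]].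
    exists (proj1_sig y). split; [|exact Hle].
    apply supp_natural. exists y; auto.
  - intros H x ->. destruct (H _ eq_refl) as [y [Hy Hle]].
    apply supp_natural in Hy. destruct Hy as [y' [Hy' <-]].
    exists y'; split; auto.
Qed.

Lemma sub_kfp (W : PO_dilator) (X Z : PO) (iota : X -> Z) (kappa : Wobj W Z -> Z)
  (S : Z -> Prop) (Hi : forall x, S (iota x))
  (Hk : forall s, (forall z, supp W s z -> S z) -> S (kappa s)) :
  kruskal_fp W X Z iota kappa ->
  kruskal_fp W X (subPO Z S) (iotaS X Z S iota Hi) (kappaS W Z S kappa Hk).
Proof.
  intros [K1 [K2 [K3 [K4 K5]]]].
  split; [|split; [|split; [|split]]].
  - intros x s e. apply (f_equal (@proj1_sig _ _)) in e. exact (K1 _ _ e).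
  - intros x y h. apply K2. exact h.
  - intros x t. rewrite le_fin1_sub. simpl. apply K3.
  - intros s y h. exact (K4 _ _ h).
  - intros s t. rewrite le_fin1_sub. simpl.
    rewrite K5.
    pose proof (Wmap_emb W _ _ (sincl Z S) (incl_emb Z S) s t) as E.
    rewrite E. tauto.
Qed.

Lemma ind_init (W : PO_dilator) (X Z : PO) (iota : X -> Z) (kappa : Wobj W Z -> Z) :
  initial_kruskal_fp W X Z iota kappa ->
  forall S : Z -> Prop, (forall x, S (iota x)) ->
  (forall s, (forall z, supp W s z -> S z) -> S (kappa s)) ->
  forall z, S z.
Proof.
  intros [HK Hin] S Hi Hk z.
  destruct (Hin _ _ _ (sub_kfp W X Z iota kappa S Hi Hk HK)) as [g [[g1 g2] _]].
  destruct (Hin _ _ _ HK) as [h [_ Hu]].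
  assert (E1 : qcomp (sincl Z S) g z = h z).
  { apply Hu. split.
    - intros x. simpl. rewrite g1. reflexivity.
    - intros s. simpl. rewrite g2. simpl. f_equal.
      symmetry. apply Wmap_comp. }
  assert (E2 : qid Z z = h z).
  { apply Hu. split.
    - intros x. reflexivity.
    - intros s. simpl. rewrite Wmap_id. reflexivity. }
  simpl in E1, E2. rewrite <- E2 in E1. rewrite <- E1. exact (proj2_sig (g z)).
Qed.

Inductive InL (W : PO_dilator) (X Z : PO) (iota : X -> Z) (kappa : Wobj W Z -> Z)
  : nat -> Z -> Prop :=
| InL_i : forall n x, InL W X Z iota kappa n (iota x)
| InL_k : forall n s, (forall z, supp W s z -> InL W X Z iota kappa n z) ->
    InL W X Z iota kappa (S n) (kappa s).

Lemma InL_mono W X Z iota kappa n z :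
  InL W X Z iota kappa n z -> forall m, n <= m -> InL W X Z iota kappa m z.
Proof.
  induction 1 as [n x|n s Hs IH]; intros m Hm.
  - constructor.
  - destruct m as [|m]; [lia|]. constructor. intros z Hz. apply IH; auto. lia.
Qed.

Lemma list_bound W (X Z : PO) iota kappa (P : Z -> Prop) (l : list Z) :
  (forall z, In z l -> P z -> exists n, InL W X Z iota kappa n z) ->
  exists N, forall z, In z l -> P z -> InL W X Z iota kappa N z.
Proof.
  induction l as [|a l IH]; intros H.
  - exists 0. intros z [].
  - destruct IH as [N HN]. { intros z Hz; apply H; right; auto. }
    destruct (classic (P a)) as [Pa|nPa].
    + destruct (H a (or_introl eq_refl) Pa) as [na Hna].
      exists (max N na). intros z [<-|Hz] Pz.
      * apply InL_mono with na; auto; lia.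
      * apply InL_mono with N; auto; lia.
    + exists N. intros z [<-|Hz] Pz; [contradiction|auto].
Qed.

Lemma InL_exists W X Z iota kappa :
  initial_kruskal_fp W X Z iota kappa ->
  forall z, exists n, InL W X Z iota kappa n z.
Proof.
  intros HI. apply (ind_init W X Z iota kappa HI).
  - intros x. exists 0. constructor.
  - intros s Hs. destruct (supp_finite W Z s) as [l Hl].
    destruct (list_bound W X Z iota kappa (supp W s) l) as [N HN].
    { intros z _ Hz. auto. }
    exists (S N). constructor. intros z Hz. apply HN; auto.
Qed.

Lemma InL_down W X Z iota kappa :
  normal W -> initial_kruskal_fp W X Z iota kappa ->
  forall n w, InL W X Z iota kappa n w -> forall z, le z w -> InL W X Z iota kappa n z.
Proof.
  intros HN HI. pose proof HI as [[K1 [K2 [K3 [K4 K5]]]] _].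
  induction 1 as [n y|n t Ht IH]; intros z Hz;
    destruct (InL_exists W X Z iota kappa HI z) as [m Hm];
    destruct Hm as [m x|m s Hs].
  - constructor.
  - exfalso. exact (K4 _ _ Hz).
  - constructor.
  - apply K5 in Hz. destruct Hz as [Hst|Hf].
    + constructor. intros a Ha.
      destruct (HN _ s t Hst a Ha) as [c [Hc Hac]].
      exact (IH c Hc a Hac).
    + destruct (Hf _ eq_refl) as [c [Hc Hle]].
      apply InL_mono with n; [|lia]. exact (IH c Hc _ Hle).
Qed.

Lemma W_mono (W : PO_dilator) (Z Z' : PO) (f : qemb Z Z') (P : Z -> Prop)
  (HP : forall a b, P a -> P b -> le a b -> le (f a) (f b))
  (s t : Wobj W Z) :
  (forall z, supp W s z -> P z) -> (forall z, supp W t z -> P z) ->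
  le s t -> le (Wmap W f s) (Wmap W f t).
Proof.
  intros Hs Ht Hst.
  pose (i := sincl Z P).
  destruct (proj2 (supp_range W _ _ i (incl_emb Z P) s)) as [s0 Hs0].
  { intros y Hy. exists (exist _ y (Hs y Hy)). reflexivity. }
  destruct (proj2 (supp_range W _ _ i (incl_emb Z P) t)) as [t0 Ht0].
  { intros y Hy. exists (exist _ y (Ht y Hy)). reflexivity. }
  assert (Eg : emb (qcomp f i)).
  { intros a b. simpl. split.
    - intro h. apply (qfun_qe _ _ f) in h. exact h.
    - intro h. apply HP; auto; apply proj2_sig. }
  pose proof (Wmap_emb W _ _ _ Eg s0 t0) as E1.
  pose proof (Wmap_emb W _ _ _ (incl_emb Z P) s0 t0) as E2.
  rewrite !Wmap_comp in E1. fold i in E2. rewrite Hs0, Ht0 in E1, E2.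
  apply E1. apply E2. exact Hst.
Qed.

Theorem lemma3p7 (W : PO_dilator) (X Z : PO)
    (iota : X -> Z) (kappa : Wobj W Z -> Z)
    (Z' : PO) (iota' : X -> Z') (kappa' : Wobj W Z' -> Z')
    (f : qemb Z Z') :
  normal W ->
  initial_kruskal_fp W X Z iota kappa ->
  kruskal_fp W X Z' iota' kappa' ->
  fp_hom W X Z Z' iota kappa iota' kappa' f ->
  (forall x y : X, le x y -> le (iota' x) (iota' y)) ->
  emb f.
Proof.
  intros HN HI HK' [Fi Fk] Hmon.
  pose proof HI as [[K1 [K2 [K3 [K4 K5]]]] _].
  destruct HK' as [L1 [L2 [L3 [L4 L5]]]].
  assert (Main : forall n z z', InL W X Z iota kappa n z -> InL W X Z iota kappa n z' ->
            le z z' -> le (f z) (f z')).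
  { induction n as [|n IH]; intros z z' Hz Hz' Hle.
    - inversion Hz; subst. inversion Hz'; subst.
      rewrite !Fi. apply Hmon, K2, Hle.
    - inversion Hz as [? x|? s Hs]; subst; inversion Hz' as [? y|? t Ht]; subst.
      + rewrite !Fi. apply Hmon, K2, Hle.
      + apply K3 in Hle. destruct (Hle _ eq_refl) as [c [Hc Hxc]].
        assert (Hf : le (f (iota x)) (f c)) by (apply IH; auto; constructor).
        rewrite Fi in *. rewrite Fk. apply L3. intros ? ->.
        exists (f c). split; auto. apply supp_natural. exists c; auto.
      + exfalso. exact (K4 _ _ Hle).
      + rewrite !Fk. apply L5. apply K5 in Hle. destruct Hle as [Hst|Hf].
        * left. apply (W_mono W Z Z' f (InL W X Z iota kappa n)); auto.
        * right. destruct (Hf _ eq_refl) as [c [Hc Hsc]].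
          assert (Hsn : InL W X Z iota kappa n (kappa s)).
          { exact (InL_down W X Z iota kappa HN HI n c (Ht c Hc) _ Hsc). }
          assert (H2 : le (f (kappa s)) (f c)) by (apply IH; auto).
          rewrite Fk in H2. intros ? ->. exists (f c). split; auto.
          apply supp_natural. exists c; auto. }
  intros z z'. split; [apply qfun_qe|].
  intro Hle.
  destruct (InL_exists W X Z iota kappa HI z) as [n Hn].
  destruct (InL_exists W X Z iota kappa HI z') as [m Hm].
  apply (Main (max n m)); auto; eapply InL_mono; eauto; lia.
Qed.
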